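(* Let $\mathbb{S}\subseteq\mathbb{R}$ be an interval and let $Q:\mathbb{S}\to\mathbb{R}$ be twice differentiable, with $q=Q'$, $f(z)=e^{Q(z)}$, $p(z)=1/(1+e^{-Q(z)})$ and $H(z)=\log(1+e^{Q(z)})$. If the matching loss $$\mathcal{L}_m(\hat s,s)=\log\big(1+e^{Q(\hat s)}\big)-\log\big(1+e^{Q(s)}\big)-(\hat s-s)\,q(s)\,p(s)$$ is convex in $\hat s$ over $\mathbb{S}$ (for all $s\in\mathbb{S}$), then $f'$ is non-decreasing on $\mathbb{S}$.
   Context: This is the case of regularization strength $\gamma=1$ of the composite Softplus primitive; $f$ is the score-transform function. *)

(* Defs.v *)
From Stdlib Require Import Reals.
From Coquelicot Require Import Coquelicot.
Open Scope R_scope.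

Definition is_interval (S : R -> Prop) : Prop :=
  forall x y z, S x -> S z -> x <= y -> y <= z -> S y.

(* l is the derivative of f at x relative to S (one-sided at endpoints):
   the difference quotient tends to l as y -> x with y in S, y <> x. *)
Definition derive_within (S : R -> Prop) (f : R -> R) (x l : R) : Prop :=
  filterlim (fun y => (f y - f x) / (y - x))
            (within (fun y => S y /\ y <> x) (locally x)) (locally l).

Definition convex_on (S : R -> Prop) (g : R -> R) : Prop :=
  forall x y t, S x -> S y -> 0 <= t <= 1 ->
    g (t * x + (1 - t) * y) <= t * g x + (1 - t) * g y.

Definition nondecreasing_on (S : R -> Prop) (g : R -> R) : Prop :=
  forall x y, S x -> S y -> x <= y -> g x <= g y.

(* Score transform and link functions of the composite Softplus primitive (gamma = 1) *)
Definition f_of (Q : R -> R) (z : R) : R := exp (Q z).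
Definition p_of (Q : R -> R) (z : R) : R := 1 / (1 + exp (- Q z)).

Definition matching_loss (Q q : R -> R) (shat s : R) : R :=
  ln (1 + exp (Q shat)) - ln (1 + exp (Q s)) - (shat - s) * q s * p_of Q s.

(* Main.v *)
Require Import Defs.
From Stdlib Require Import Reals Lra.
From Coquelicot Require Import Coquelicot.
Open Scope R_scope.

Lemma dw_eps S F x l : derive_within S F x l -> forall eps, 0 < eps ->
  exists delta, 0 < delta /\ forall z, S z -> z <> x -> Rabs (z - x) < delta ->
    Rabs ((F z - F x)/(z - x) - l) < eps.
Proof.
  intros H eps He.
  specialize (H (ball l eps) (locally_ball l (mkposreal eps He))).
  destruct H as [[d Hd] H]. exists d. split; [exact Hd|].
  intros z Sz nz Hz. apply (H z); [exact Hz| split; auto].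
Qed.
Lemma exp_convex u v t : 0 <= t <= 1 -> exp (t*u + (1-t)*v) <= t * exp u + (1-t) * exp v.
Proof.
  intros Ht. set (m := t*u + (1-t)*v).
  assert (Hu : exp m * (1 + (u - m)) <= exp u).
  { replace u with (m + (u-m)) at 2 by ring. rewrite exp_plus.
    pose proof (exp_ineq1_le (u-m)). pose proof (exp_pos m). nra. }
  assert (Hv : exp m * (1 + (v - m)) <= exp v).
  { replace v with (m + (v-m)) at 2 by ring. rewrite exp_plus.
    pose proof (exp_ineq1_le (v-m)). pose proof (exp_pos m). nra. }
  assert (E : t * (exp m * (1 + (u - m))) + (1-t) * (exp m * (1 + (v - m))) = exp m)
    by (unfold m; ring).
  nra.
Qed.

Lemma slopes S F a b c : convex_on S F -> S a -> S c -> a < b -> b < c ->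
  (F b - F a)/(b - a) <= (F c - F a)/(c - a) /\
  (F c - F a)/(c - a) <= (F c - F b)/(c - b).
Proof.
  intros HF Sa Sc hab hbc.
  set (t := (c - b)/(c - a)).
  assert (Ht : 0 <= t <= 1).
  { unfold t; split. apply Rdiv_le_0_compat; lra.
    apply (Rmult_le_reg_r (c-a)); [lra|]. field_simplify; lra. }
  pose proof (HF a c t Sa Sc Ht) as H.
  replace (t*a + (1-t)*c) with b in H by (unfold t; field; lra).
  unfold t in H.
  assert (H1 : (F b - F a) * (c - a) <= (F c - F a) * (b - a)).
  { apply (Rmult_le_reg_r (/(c-a))). apply Rinv_0_lt_compat; lra.
    replace ((F b - F a) * (c - a) * / (c - a)) with (F b - F a) by (field; lra).
    replace ((F c - F a) * (b - a) * / (c - a)) with ((b-a)/(c-a) * (F c - F a)) by (field; lra).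
    replace (1 - (c-b)/(c-a)) with ((b-a)/(c-a)) in H by (field; lra).
    replace ((c-b)/(c-a)) with (1 - (b-a)/(c-a)) in H by (field; lra). lra. }
  split.
  - apply (Rmult_le_reg_r ((b-a)*(c-a))). nra.
    replace ((F b - F a) / (b - a) * ((b - a) * (c - a))) with ((F b - F a) * (c - a)) by (field; lra).
    replace ((F c - F a) / (c - a) * ((b - a) * (c - a))) with ((F c - F a) * (b - a)) by (field; lra).
    lra.
  - apply (Rmult_le_reg_r ((c-b)*(c-a))). nra.
    replace ((F c - F b) / (c - b) * ((c - b) * (c - a))) with ((F c - F b) * (c - a)) by (field; lra).
    replace ((F c - F a) / (c - a) * ((c - b) * (c - a))) with ((F c - F a) * (c - b)) by (field; lra).
    nra.
Qed.

Lemma conv_deriv_mono S F dF : is_interval S -> convex_on S F ->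
  (forall x, S x -> derive_within S F x (dF x)) -> nondecreasing_on S dF.
Proof.
  intros HI HF HD x y Sx Sy hxy.
  destruct (Req_dec x y) as [->|hne]; [lra|].
  assert (hlt : x < y) by lra.
  set (s := (F y - F x)/(y - x)).
  assert (A : dF x <= s).
  { apply Rnot_lt_le; intro C.
    destruct (dw_eps S F x (dF x) (HD x Sx) (dF x - s)) as [d [hd Hd]]; [lra|].
    set (z := x + Rmin (d/2) ((y-x)/2)).
    assert (hm : 0 < Rmin (d/2) ((y-x)/2)) by (apply Rmin_pos; lra).
    pose proof (Rmin_l (d/2) ((y-x)/2)). pose proof (Rmin_r (d/2) ((y-x)/2)).
    assert (hz1 : x < z) by (unfold z; lra).
    assert (hz2 : z < y) by (unfold z; lra).
    assert (Sz : S z) by (apply (HI x z y); auto; lra).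
    destruct (slopes S F x z y HF Sx Sy hz1 hz2) as [P1 _].
    assert (Hz := Hd z Sz ltac:(lra) ltac:(rewrite Rabs_right; unfold z; lra)).
    apply Rabs_def2 in Hz. fold s in P1. lra. }
  assert (B : s <= dF y).
  { apply Rnot_lt_le; intro C.
    destruct (dw_eps S F y (dF y) (HD y Sy) (s - dF y)) as [d [hd Hd]]; [lra|].
    set (z := y - Rmin (d/2) ((y-x)/2)).
    assert (hm : 0 < Rmin (d/2) ((y-x)/2)) by (apply Rmin_pos; lra).
    pose proof (Rmin_l (d/2) ((y-x)/2)). pose proof (Rmin_r (d/2) ((y-x)/2)).
    assert (hz1 : x < z) by (unfold z; lra).
    assert (hz2 : z < y) by (unfold z; lra).
    assert (Sz : S z) by (apply (HI x z y); auto; lra).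
    destruct (slopes S F x z y HF Sx Sy hz1 hz2) as [_ P2].
    assert (Hz := Hd z Sz ltac:(lra) ltac:(rewrite Rabs_left; unfold z; lra)).
    apply Rabs_def2 in Hz. fold s in P2.
    replace ((F z - F y) / (z - y)) with ((F y - F z)/(y - z)) in Hz by (field; lra).
    lra. }
  lra.
Qed.

Theorem corollaryG3 (S : R -> Prop) (Q q : R -> R) :
  is_interval S ->
  (forall x, S x -> derive_within S Q x (q x)) ->
  (forall x, S x -> exists d, derive_within S q x d) ->
  (forall s, S s -> convex_on S (fun shat => matching_loss Q q shat s)) ->
  forall df : R -> R,
    (forall x, S x -> derive_within S (f_of Q) x (df x)) ->
    nondecreasing_on S df.
Proof.
  intros HI _ _ HC df HD x y Sx Sy hxy.
  set (g := fun z => ln (1 + exp (Q z))).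
  assert (Hg : convex_on S g).
  { intros a b t Sa Sb Ht. pose proof (HC x Sx a b t Sa Sb Ht) as H.
    unfold matching_loss in H. unfold g.
    set (K := q x * p_of Q x) in H. set (C := ln (1 + exp (Q x))) in H.
    set (m := t*a + (1-t)*b) in *.
    assert (E : t * (ln (1 + exp (Q a)) - C - (a - x) * q x * p_of Q x) +
       (1 - t) * (ln (1 + exp (Q b)) - C - (b - x) * q x * p_of Q x)
       = t * ln (1 + exp (Q a)) + (1-t) * ln (1 + exp (Q b)) - C - (m - x) * K)
      by (unfold m, K; ring).
    assert (E2 : ln (1 + exp (Q m)) - C - (m - x) * q x * p_of Q x
       = ln (1 + exp (Q m)) - C - (m - x) * K) by (unfold K; ring).
    lra. }
  assert (Hf : convex_on S (f_of Q)).
  { intros a b t Sa Sb Ht.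
    assert (E : forall z, f_of Q z = exp (g z) - 1).
    { intro z. unfold g, f_of. rewrite exp_ln. ring.
      pose proof (exp_pos (Q z)). lra. }
    rewrite !E.
    pose proof (exp_convex (g a) (g b) t Ht).
    assert (exp (g (t*a + (1-t)*b)) <= exp (t * g a + (1-t) * g b)).
    { destruct (Hg a b t Sa Sb Ht) as [L|L]. left; apply exp_increasing; exact L.
      rewrite L; lra. }
    lra. }
  exact (conv_deriv_mono S (f_of Q) df HI Hf HD x y Sx Sy hxy).
Qed.
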